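(* (Generalized Pigeonhole Principle.) Let $n\geq 1$, $r\geq 0$ and $s$ be integers with $0\leq s<n$. If $rn+s$ or more objects are placed in $n$ boxes, then for each integer $m$ with $1\leq m\leq n$ there exist $m$ boxes which together contain at least $rm+\min(s,m)$ objects. *)

(* Defs.v *)
From mathcomp Require Import all_boot.

(* Main.v *)
Require Import Defs.
From mathcomp Require Import all_boot.
From mathcomp Require Import zify.

Lemma exists_card (n m : nat) : m <= n -> exists B : {set 'I_n}, #|B| = m.
Proof.
move=> Hmn.
exists [set widen_ord Hmn i | i : 'I_m].
rewrite card_imset ?card_ord //.
by move=> i j /(congr1 val) /= /val_inj.
Qed.

Theorem theorem2 (n r s : nat) (c : 'I_n -> nat) :
  1 <= n -> s < n ->
  r * n + s <= \sum_(i < n) c i ->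
  forall m : nat, 1 <= m <= n ->
  exists B : {set 'I_n}, #|B| = m /\ r * m + minn s m <= \sum_(i in B) c i.
Proof.
move=> Hn Hs Hsum m /andP [Hm1 Hmn].
have [B0 HB0] := @exists_card n m Hmn.
have HB0' : #|B0| == m by apply/eqP.
case: (@arg_maxnP _ B0 (fun B : {set 'I_n} => #|B| == m) (fun B : {set 'I_n} => \sum_(i in B) c i) HB0') => B /eqP HB Hmax.
exists B; split => //.
have [/existsP [x /andP [xB cx]] | nox] := boolP [exists x, (x \in B) && (c x <= r)].
- have [/existsP [y /andP [yB cy]] | noy] := boolP [exists y, (y \notin B) && (r < c y)].
  + exfalso.
    have yB' : y \notin B :\ x by rewrite in_setD1 (negbTE yB) andbF.
    have Hc : #|y |: (B :\ x)| == m.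
      have := cardsD1 x B; rewrite xB HB cardsU1 yB' /= => ->; apply/eqP; lia.
    have := Hmax _ Hc.
    rewrite big_setU1 //= (big_setD1 x xB) /=.
    lia.
  + have Hsplit : \sum_(i < n) c i = \sum_(i < n | i \in B) c i + \sum_(i < n | i \notin B) c i.
      exact: (bigID (fun i => i \in B) predT c).
    have Hout : \sum_(i < n | i \notin B) c i <= \sum_(i < n | i \notin B) r.
      apply: leq_sum => i iB.
      move: noy; rewrite negb_exists => /forallP /(_ i).
      by rewrite iB /= -leqNgt.
    rewrite sum_nat_const in Hout.
    have Hcard : #|[pred i : 'I_n | i \notin B]| = n - m.
      have := cardC (mem B); rewrite card_ord HB => E.
      have -> : #|[pred i : 'I_n | i \notin B]| = #|[predC mem B]| by apply: eq_card.
      move: E; set k := #|[predC mem B]| => E; lia.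
    rewrite Hcard in Hout.
    have : \sum_(i in B) c i = \sum_(i < n | i \in B) c i by [].
    move=> E; rewrite E.
    have Hrn : r * n = r * m + r * (n - m) by rewrite -mulnDr subnKC.
    have : s >= minn s m by rewrite geq_minl.
    rewrite mulnC in Hout.
    lia.
- have Hin : \sum_(i in B) (r.+1) <= \sum_(i in B) c i.
    apply: leq_sum => i iB.
    move: nox; rewrite negb_exists => /forallP /(_ i).
    by rewrite iB /= -ltnNge.
  rewrite sum_nat_const HB in Hin.
  have : minn s m <= m by rewrite geq_minr.
  lia.
Qed.
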